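(* Let $g$ be a non-trivial non-negative real-valued multiplicative function, uniformly bounded on the primes, for which the series $\sum q^{-1}g(q)$, taken over prime-powers $q=p^k$ with $k\ge2$, converges, and for which the sums $y^{-1}\sum_{q\le y}g(q)\log q$ (over all prime-powers $q\le y$) are uniformly bounded for $y\ge2$. Then \[ \sum_{u<n\le v}\frac{g(n)}{n} \ll \left(\log\Big(\frac{\log v}{\log u}\Big)+\frac{1}{\log x}\right)\sum_{n\le x}\frac{g(n)}{n} \] uniformly for $x^{1/2}\le u\le v\le x^{3/2}$, $x\ge2$.
   Context: Multiplicative means $f(mn)=f(m)f(n)$ whenever $\gcd(m,n)=1$, with $f(1)=1$. $A\ll B$ means $|A|\le KB$ for a constant $K$ (here depending on $g$ but not on $u,v,x$). *)

(* Defs.v *)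
From HB Require Import structures.
From mathcomp Require Import all_boot all_order all_algebra.
From mathcomp Require Import all_classical all_reals all_analysis.
Set Implicit Arguments. Unset Strict Implicit. Unset Printing Implicit Defensive.
Import Order.TTheory GRing.Theory Num.Theory numFieldNormedType.Exports.
Local Open Scope ring_scope.

Definition multiplicative_fn (R : realType) (g : nat -> R) : Prop :=
  g 1%N = 1 /\
  forall m n : nat, (0 < m)%N -> (0 < n)%N -> coprime m n -> g (m * n)%N = g m * g n.

(* non-trivial: not the identity of Dirichlet convolution (g(n)=0 for all n>1) *)
Definition nontrivial (R : realType) (g : nat -> R) : Prop :=
  exists n : nat, (1 < n)%N /\ g n != 0.

Definition is_pp (k0 : nat) (q : nat) : bool :=
  `[< exists p k : nat, prime p /\ (k0 <= k)%N /\ q = (p ^ k)%N >].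

Definition sum_gn (R : realType) (g : nat -> R) (a b : R) : R :=
  \sum_(0 <= n < (Num.truncn b).+1 | (0 < n)%N && (a < n%:R)) g n / n%:R.

Definition cheb_g (R : realType) (g : nat -> R) (y : R) : R :=
  \sum_(0 <= q < (Num.truncn y).+1 | is_pp 1 q) g q * ln q%:R.

Definition pp2_terms (R : realType) (g : nat -> R) : R^nat :=
  fun q => if is_pp 2 q then g q / q%:R else 0.

(* Main.v *)
Require Import Defs.
From HB Require Import structures.
From mathcomp Require Import all_boot all_order all_algebra.
From mathcomp Require Import all_classical all_reals all_analysis.
From mathcomp Require Import ring lra.
Import Order.TTheory GRing.Theory Num.Theory numFieldNormedType.Exports.
Local Open Scope ring_scope.

Lemma is_pp_ge2 k q : (0 < k)%N -> is_pp k q -> (2 <= q)%N.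
Proof.
move=> k0 /asboolP [p [k' [pp [hk ->]]]].
have p2 := prime_gt1 pp.
apply: (leq_trans p2); rewrite -[X in (X <= _)%N]expn1 leq_pexp2l //; last by apply: leq_trans hk.
by apply: ltnW.
Qed.

Lemma pp1_ge2 q : is_pp 1 q -> (2 <= q)%N.
Proof. exact: is_pp_ge2. Qed.

Lemma ln_le_sub1 (R : realType) (t : R) : 0 < t -> ln t <= t - 1.
Proof.
move=> t0; have := @le_ln1Dx R (t - 1).
have -> : t = 1 + (t - 1) by ring.
rewrite [X in X - 1]addrC addrK; apply; lra.
Qed.

Lemma ln_prod (R : realType) (I : Type) (r : seq I) (P : pred I) (F : I -> R) :
  (forall i, P i -> 0 < F i) -> ln (\prod_(i <- r | P i) F i) = \sum_(i <- r | P i) ln (F i).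
Proof.
move=> Fp; elim: r => [|a r IH]; first by rewrite !big_nil ln1.
rewrite !big_cons; case: ifP => Pa //.
rewrite lnM ?IH //; rewrite ?posrE ?Fp //.
apply: prodr_gt0 => i; exact: Fp.
Qed.

Section Main.
Variable R : realType.
Variable g : nat -> R.
Hypothesis g1 : g 1%N = 1.
Hypothesis gM : forall m n : nat, (0 < m)%N -> (0 < n)%N -> coprime m n -> g (m * n)%N = g m * g n.
Hypothesis g0 : forall n, 0 <= g n.
Variable C : R.
Hypothesis hC : forall {y : R}, 2 <= y -> `|y^-1 * cheb_g g y| <= C.

Lemma cheb_ge0 y : 0 <= cheb_g g y.
Proof.
rewrite /cheb_g; apply: sumr_ge0 => q /pp1_ge2 q2.
apply: mulr_ge0 => //; apply: ln_ge0; rewrite (ler_nat R 1). by apply: ltnW; apply: q2.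
Qed.

Lemma C_ge0 : 0 <= C.
Proof. have := hC (lexx (2:R)); apply: le_trans. exact: normr_ge0. Qed.

Lemma cheb_small y : y < 2 -> cheb_g g y = 0.
Proof.
move=> y2; rewrite /cheb_g big_nat_cond big1 // => q /andP [/andP [_ qlt] /pp1_ge2 q2].
have : (Num.truncn y <= 1)%N by rewrite truncn_le_nat.
rewrite ltnS in qlt; move=> h; have := leq_trans q2 (leq_trans qlt h); by [].
Qed.

Lemma cheb_le y : 0 <= y -> cheb_g g y <= C * y.
Proof.
move=> y0'; case: (boolP (y < 2)) => y2.
  by rewrite cheb_small // mulr_ge0 ?C_ge0.
rewrite -leNgt in y2.
have y0 : 0 < y by apply: lt_le_trans y2.
have := hC y2; rewrite ger0_norm; last first.
  by apply: mulr_ge0; [rewrite invr_ge0; apply: ltW|apply: cheb_ge0].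
by rewrite ler_pdivrMl // mulrC.
Qed.

Definition GN N := \sum_(0 <= n < N.+1 | (0 < n)%N) g n / n%:R.
Definition SN N := \sum_(0 <= n < N.+1 | (0 < n)%N) g n.

Lemma gln n N : (0 < n)%N -> (n <= N)%N ->
  g n * ln n%:R = \sum_(p < N.+1 | (p : nat) \in primes n) g (n`_p)%N * ln (n`_p)%N%:R * g (n`_p^')%N.
Proof.
move=> n0 nN.
have hn : (n%:R : R) = \prod_(0 <= p < N.+1 | p \in predT) ((n`_p)%N)%:R.
  rewrite -natr_prod; congr (_%:R); rewrite -[LHS](partnT n0) (widen_partn _ nN).
  by apply: eq_bigr => p _; rewrite p_part.
rewrite hn ln_prod; last by move=> p _; rewrite ltr0n part_gt0.
rewrite mulr_sumr big_mkord [RHS]big_mkcond /=; apply: eq_bigr => p _.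
case: ifP => pn.
  by rewrite [RHS]mulrAC -gM ?part_gt0 ?coprime_partC // partnC.
have -> : (n`_p)%N = 1%N by apply/eqP; rewrite p_part_eq1; apply/negbT.
by rewrite ln1 mulr0.
Qed.

Lemma sum_sub_le (T : finType) (S B : {pred T}) (F : T -> R) :
  {subset S <= B} -> (forall x, x \in B -> 0 <= F x) ->
  \sum_(x in S) F x <= \sum_(x in B) F x.
Proof.
move=> SB F0; rewrite [X in _ <= X](bigID (mem S)) /=.
have -> : \sum_(i in B | i \in S) F i = \sum_(i in S) F i.
  apply: eq_bigl => i; case iS: (i \in S); rewrite ?andbT ?andbF //; exact: SB.
rewrite lerDl; apply: sumr_ge0 => i /andP [iB _]; exact: F0.
Qed.

Lemma cheb_eq N m : (0 < m)%N ->
  cheb_g g (N%:R / m%:R) = \sum_(q < N.+1 | is_pp 1 q && (q * m <= N)%N) g q * ln q%:R.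
Proof.
move=> m0; rewrite /cheb_g.
have m0' : (0 : R) < m%:R by rewrite ltr0n.
have tN : (Num.truncn (N%:R / m%:R : R) < N.+1)%N.
  rewrite ltnS truncn_le_nat ltr_pdivrMr // -natrM ltr_nat.
  by rewrite (leq_trans (ltnSn N)) // leq_pmulr.
rewrite (big_nat_widen _ _ _ _ _ tN) big_mkord; apply: eq_bigl => q /=.
congr (_ && _); rewrite ltnS truncn_ge_nat ?divr_ge0 ?ler0n // ler_pdivlMr //.
by rewrite -natrM ler_nat.
Qed.

Lemma ln_nat_ge0 q : 0 <= ln (q%:R : R).
Proof. case: q => [|q]; first by rewrite ln0. by apply: ln_ge0; rewrite ler1n. Qed.

Lemma sum_gln_le N : \sum_(0 <= n < N.+1 | (0 < n)%N) g n * ln n%:R <= C * N%:R * GN N.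
Proof.
pose T := ('I_N.+1 * 'I_N.+1)%type.
pose F (y : T) := g y.2 * ln ((y.2 : nat)%:R : R) * g y.1.
pose A := [pred x : T | (0 < x.1)%N && ((x.2 : nat) \in primes x.1)].
pose h (x : T) : T := (inord (x.1`_x.2^')%N, inord (x.1`_x.2)%N).
pose k (y : T) : T := (inord (y.2 * y.1)%N, inord (pdiv y.2)).
pose B := [pred y : T | (0 < y.1)%N && (is_pp 1 y.2 && (y.2 * y.1 <= N)%N)].
have partle (n : 'I_N.+1) (pi : nat_pred) : (0 < n)%N -> (n`_pi <= N)%N.
  move=> n0; apply: leq_trans (dvdn_leq n0 (dvdn_part _ _)) _.
  by rewrite -ltnS ltn_ord.
have hA x : x \in A -> ((h x).1 : nat) = (x.1`_x.2^')%N /\ ((h x).2 : nat) = (x.1`_x.2)%N.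
  case: x => n p /andP [/= n0 _]; by rewrite /= !inordK ?ltnS ?partle.
have step1 : \sum_(0 <= n < N.+1 | (0 < n)%N) g n * ln n%:R = \sum_(x in A) F (h x).
  rewrite big_mkord; under eq_bigr => n n0 do rewrite (@gln n N n0 (ltn_ord n)).
  rewrite pair_big_dep; apply: eq_big => [x|x xA]; first by [].
  by have [e1 e2] := hA x xA; rewrite /F e1 e2.
have hk x : x \in A -> k (h x) = x.
  move=> xA; have [e1 e2] := hA x xA; move: xA.
  case: x e1 e2 => n p /= e1 e2 /andP [/= n0 pn].
  rewrite /k e1 e2 /= partnC //; congr (_, _); first exact: inord_val.
  have pp : prime p by move: pn; rewrite mem_primes => /andP [].
  rewrite p_part -(prednK (_ : 0 < logn p n)%N) ?logn_gt0 // pdiv_pfactor //.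
  exact: inord_val.
have hinj : {in A &, injective h}.
  by move=> x y xA yA hxy; rewrite -(hk x xA) -(hk y yA) hxy.
have step3 : \sum_(y in h @: A) F y <= \sum_(y in B) F y.
  apply: sum_sub_le.
    move=> y /imsetP [x xA ->]; have [e1 e2] := hA x xA; move: xA.
    case: x e1 e2 => n p /= e1 e2 /andP [/= n0 pn].
    have pp : prime p by move: pn; rewrite mem_primes => /andP [].
    rewrite inE /= e1 e2 part_gt0 /= partnC // -ltnS ltn_ord andbT.
    apply/asboolP; exists p, (logn p n); split => //; split; last exact: p_part.
    by rewrite logn_gt0.
  move=> y _; rewrite /F; apply: mulr_ge0 => //; apply: mulr_ge0 => //; exact: ln_nat_ge0.
rewrite step1 -big_imset //; apply: le_trans step3 _.
have -> : \sum_(y in B) F y = \sum_(m : 'I_N.+1 | (0 < m)%N)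
    \sum_(q : 'I_N.+1 | is_pp 1 q && (q * m <= N)%N) g q * ln (q : nat)%:R * g m.
  by rewrite pair_big_dep.
rewrite /GN big_mkord mulr_sumr; apply: ler_sum => m m0.
rewrite -mulr_suml -(@cheb_eq N m m0) mulrC.
have hy : (0 : R) <= N%:R / m%:R by rewrite divr_ge0.
have := ler_wpM2l (g0 m) (@cheb_le _ hy); move/le_trans; apply.
by rewrite le_eqVlt; apply/orP; left; apply/eqP; ring.
Qed.

Lemma GN_ge0 N : 0 <= GN N.
Proof. apply: sumr_ge0 => n _; apply: divr_ge0 => //. Qed.

Lemma SN_ge0 N : 0 <= SN N.
Proof. by apply: sumr_ge0 => n _. Qed.

Lemma key N : SN N * ln N%:R <= (C + 1) * N%:R * GN N.
Proof.
rewrite /SN mulr_suml.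
have -> : \sum_(0 <= i < N.+1 | (0 < i)%N) g i * ln (N%:R : R) =
  \sum_(0 <= i < N.+1 | (0 < i)%N) (g i * (ln (N%:R : R) - ln i%:R)) +
  \sum_(0 <= i < N.+1 | (0 < i)%N) g i * ln i%:R.
  by rewrite -big_split; apply: eq_bigr => i _ /=; ring.
rewrite mulrDl mulrDl mul1r addrC; apply: lerD; first exact: sum_gln_le.
rewrite /GN mulr_sumr big_nat_cond [X in _ <= X]big_nat_cond; apply: ler_sum => n /andP [/andP [_ nN] n0].
rewrite ltnS in nN.
have n0' : (0 : R) < n%:R by rewrite ltr0n.
have N0' : (0 : R) < N%:R by rewrite ltr0n (leq_trans n0 nN).
rewrite -ln_div ?posrE //.
have -> : N%:R * (g n / n%:R) = g n * (N%:R / n%:R) by ring.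
apply: ler_wpM2l => //.
have : (0 : R) < N%:R / n%:R by rewrite divr_gt0.
move/ln_le_sub1; lra.
Qed.

Lemma SN_rec N : SN N.+1 = SN N + g N.+1.
Proof. by rewrite /SN big_mkcond big_nat_recr //= -big_mkcond. Qed.

Lemma GN_rec N : GN N.+1 = GN N + g N.+1 / N.+1%:R.
Proof. by rewrite /GN big_mkcond big_nat_recr //= -big_mkcond. Qed.

Lemma abel M k : (0 < M)%N ->
  GN (M + k) - GN M = SN (M + k) / (M + k)%:R - SN M / M%:R +
     \sum_(M <= n < M + k) SN n / (n%:R * n.+1%:R).
Proof.
move=> M0; elim: k => [|k IH]; first by rewrite addn0 big_geq // subrr addr0 subrr.
rewrite addnS GN_rec SN_rec big_nat_recr /=; last by rewrite leq_addr.
have h0 : (M + k)%:R != (0 : R) by rewrite pnatr_eq0 -lt0n addn_gt0 M0.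
have h1 : (M + k).+1%:R != (0 : R) by rewrite pnatr_eq0.
have IH' : GN (M + k) = GN M + (SN (M + k) / (M + k)%:R - SN M / M%:R +
     \sum_(M <= n < M + k) SN n / (n%:R * n.+1%:R)) by rewrite -IH; ring.
rewrite IH'; field.
have hM : (0:R) < M%:R by rewrite ltr0n.
have hk : (0:R) <= k%:R by [].
by rewrite !gt_eqF //; lra.
Qed.

Lemma GN_split M N : (M <= N)%N ->
  GN N = GN M + \sum_(0 <= n < N.+1 | (0 < n)%N && (M < n)%N) g n / n%:R.
Proof.
move=> MN; rewrite /GN (bigID (fun n => (n <= M)%N)) /=; congr (_ + _).
  rewrite [in RHS](big_nat_widen 0 M.+1 N.+1) //.
by apply: eq_bigl => n; rewrite [(M < n)%N]ltnNge.
Qed.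

Lemma GN_mono M N : (M <= N)%N -> GN M <= GN N.
Proof.
move=> MN; rewrite (@GN_split M N MN) lerDl; apply: sumr_ge0 => n _; exact: divr_ge0.
Qed.

Lemma SN_bound n N : (2 <= n)%N -> (n <= N)%N -> SN n / n%:R <= (C + 1) * GN N / ln n%:R.
Proof.
move=> n2 nN.
have n0 : (0 : R) < n%:R by rewrite ltr0n (leq_trans _ n2).
have l0 : (0 : R) < ln n%:R by apply: ln_gt0; rewrite ltr1n.
have c0 : 0 <= C + 1 by have := C_ge0; lra.
rewrite ler_pdivlMr // mulrAC ler_pdivrMr //.
apply: le_trans (key n) _.
have h := @GN_mono n N nN. have h2 : 0 <= GN N - GN n by rewrite subr_ge0. have := mulr_ge0 (mulr_ge0 c0 (ltW n0)) h2. nra.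
Qed.

Lemma abel_bound M N : (2 <= M)%N -> (M <= N)%N ->
  GN N - GN M <= (C + 1) * GN N * ((ln N%:R)^-1 + \sum_(M.+1 <= n < N) (n%:R * ln n%:R)^-1).
Proof.
move=> M2 MN; have M0 : (0 < M)%N by apply: leq_trans M2.
have c0 : 0 <= C + 1 by have := C_ge0; lra.
have GN0 := GN_ge0 N.
have lnpos n : (2 <= n)%N -> (0 : R) < ln n%:R by move=> n2; apply: ln_gt0; rewrite ltr1n.
have npos n : (2 <= n)%N -> (0 : R) < n%:R by move=> n2; rewrite ltr0n (leq_trans _ n2).
have sum0 : 0 <= \sum_(M.+1 <= n < N) (n%:R * ln (n%:R : R))^-1.
  rewrite big_nat_cond; apply: sumr_ge0 => n /andP [/andP [Mn _] _].
  have n2 : (2 <= n)%N by apply: leq_trans M2 (ltnW Mn).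
  by rewrite invr_ge0; apply: mulr_ge0; apply: ltW; [apply: npos|apply: lnpos].
have N2 : (2 <= N)%N by apply: leq_trans MN.
have RHS0 : 0 <= (C + 1) * GN N * ((ln N%:R)^-1 + \sum_(M.+1 <= n < N) (n%:R * ln (n%:R : R))^-1).
  apply: mulr_ge0; first exact: mulr_ge0.
  apply: addr_ge0 => //; rewrite invr_ge0; apply: ltW; exact: lnpos.
rewrite -(subnKC MN) abel // subnKC //.
case: (eqVneq M N) => [MN2|MNe]. { subst N. by rewrite big_geq // subrr add0r. }
have MltN : (M < N)%N by rewrite ltn_neqAle MNe MN.
rewrite big_ltn //.
have ha : SN N / N%:R <= (C + 1) * GN N / ln N%:R by apply: SN_bound.
have hb : SN M / (M%:R * M.+1%:R) <= SN M / M%:R.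
  rewrite invfM mulrA; apply: ler_piMr; first by rewrite divr_ge0 ?SN_ge0.
  by rewrite invf_le1 ?ler1n // ltr0n.
have hc : \sum_(M.+1 <= n < N) SN n / (n%:R * n.+1%:R) <=
          (C + 1) * GN N * \sum_(M.+1 <= n < N) (n%:R * ln (n%:R : R))^-1.
  rewrite mulr_sumr big_nat_cond [X in _ <= X]big_nat_cond.
  apply: ler_sum => n /andP [/andP [Mn nN] _].
  have n2 : (2 <= n)%N by apply: leq_trans M2 (ltnW Mn).
  have hn := @SN_bound n N n2 (ltnW nN).
  have X0 : 0 <= (C + 1) * GN N / ln n%:R.
    by rewrite divr_ge0 ?mulr_ge0 //; apply: ltW; exact: lnpos.
  have n1 : (n%:R : R) <= n.+1%:R by rewrite ler_nat.
  rewrite invfM mulrA; apply: le_trans (ler_wpM2r _ hn) _; first by rewrite invr_ge0.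
  have -> : (C + 1) * GN N / (n%:R * ln (n%:R : R)) = (C + 1) * GN N / ln n%:R / n%:R by rewrite invfM; ring.
  apply: ler_wpM2l => //; rewrite lef_pV2 ?posrE ?ltr0n //; exact: (leq_trans _ n2).
rewrite mulrDr; move: ha hb hc.
set a := SN N / N%:R; set b := SN M / M%:R; set b' := SN M / (M%:R * M.+1%:R).
set s := \sum_(M.+1 <= i < N) _; set t := (C + 1) * GN N / _; set u := (C + 1) * GN N * _.
lra.
Qed.

Lemma ln_diff (a b : R) : 0 < b -> 0 < a -> 1 - b / a <= ln a - ln b.
Proof.
move=> b0 a0; have := @ln_le_sub1 R _ (divr_gt0 b0 a0).
rewrite ln_div ?posrE //; lra.
Qed.

Lemma tele n : (3 <= n)%N ->
  (n%:R * ln (n%:R : R))^-1 <= ln (ln (n%:R : R)) - ln (ln (n.-1%:R : R)).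
Proof.
move=> n3.
have n1 : (0 : R) < n.-1%:R by rewrite ltr0n -ltnS prednK // (leq_trans _ n3).
have n0 : (0 : R) < n%:R by rewrite ltr0n (leq_trans _ n3).
have l1 : (0 : R) < ln n.-1%:R by apply: ln_gt0; rewrite ltr1n -ltnS prednK // (leq_trans _ n3).
have l0 : (0 : R) < ln n%:R by apply: ln_gt0; rewrite ltr1n (leq_trans _ n3).
have e0 : (n%:R : R) = n.-1%:R + 1 by rewrite natr1 prednK // (leq_trans _ n3).
have e : (n.-1%:R : R) = n%:R - 1 by rewrite e0 addrK.
have h1 := @ln_diff _ _ n1 n0.
have h2 := @ln_diff _ _ l1 l0.
have h3 : (n%:R)^-1 <= ln n%:R - ln (n.-1%:R : R).
  apply: le_trans _ h1; rewrite e.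
  have -> : 1 - (n%:R - 1) / n%:R = (n%:R : R)^-1 by field; rewrite gt_eqF.
  by [].
apply: le_trans _ h2; rewrite invfM.
have -> : 1 - ln n.-1%:R / ln n%:R = (ln n%:R - ln (n.-1%:R : R)) / ln (n%:R : R).
  by field; rewrite gt_eqF.
by rewrite ler_pM2r ?invr_gt0.
Qed.

Lemma tele_sum a k : (2 <= a)%N ->
  \sum_(a.+1 <= n < (a + k).+1) (n%:R * ln (n%:R : R))^-1 <=
  ln (ln ((a + k)%:R : R)) - ln (ln (a%:R : R)).
Proof.
move=> a2; elim: k => [|k IH]; first by rewrite addn0 big_geq // subrr.
rewrite addnS big_nat_recr /=; last by rewrite ltnS leq_addr.
have := @tele (a + k).+1; rewrite /= ltnS (leq_trans a2 (leq_addr _ _)) => /(_ isT) h.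
move: IH h; set s := \sum_(_ <= _ < _) _; set t := (_ ^-1); lra.
Qed.

Lemma lnln_le (x y : R) : 1 < x -> x <= y -> ln (ln x) <= ln (ln y).
Proof.
move=> x1 xy; have y1 : 1 < y by apply: lt_le_trans xy.
rewrite ler_ln ?posrE ?ln_gt0 //; rewrite ler_ln ?posrE //; [apply: lt_trans x1|apply: lt_trans y1] => //.
Qed.

Lemma sum_gn_GN (u v : R) : 0 <= u -> u <= v ->
  sum_gn g u v = GN (Num.truncn v) - GN (Num.truncn u).
Proof.
move=> u0 uv; rewrite (@GN_split (Num.truncn u) (Num.truncn v) (le_truncn uv)) [GN (Num.truncn u) + _]addrC addrK.
rewrite /sum_gn; apply: eq_bigl => n; congr (_ && _).
by rewrite truncn_lt_nat.
Qed.

Lemma mainA (u v : R) : 2 <= u -> u <= v ->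
  sum_gn g u v <= (C + 1) * GN (Num.truncn v) * (2 * (ln u)^-1 + (ln (ln v) - ln (ln u))).
Proof.
move=> u2 uv.
have u0 : 0 <= u by apply: le_trans u2.
have u1 : 1 < u by apply: lt_le_trans u2; lra.
have lu : 0 < ln u by apply: ln_gt0.
have c0 : 0 <= C + 1 by have := C_ge0; lra.
have D0 : 0 <= ln (ln v) - ln (ln u) by rewrite subr_ge0; apply: lnln_le.
set M := Num.truncn u; set N := Num.truncn v.
have M2 : (2 <= M)%N by rewrite truncn_ge_nat.
have MN : (M <= N)%N by apply: le_truncn.
have RHS0 : 0 <= (C + 1) * GN N * (2 * (ln u)^-1 + (ln (ln v) - ln (ln u))).
  apply: mulr_ge0; first by apply: mulr_ge0 => //; apply: GN_ge0.
  by apply: addr_ge0 => //; apply: mulr_ge0 => //; rewrite invr_ge0 ltW.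
rewrite sum_gn_GN // -/M -/N.
case: (eqVneq M N) => [MNe|MNe]; first by rewrite MNe subrr.
have MltN : (M < N)%N by rewrite ltn_neqAle MNe MN.
apply: le_trans (@abel_bound M N M2 MN) _.
apply: ler_wpM2l; first by apply: mulr_ge0 => //; apply: GN_ge0.
have uN : u < N%:R by rewrite -truncn_lt_nat.
have uM1 : u < M.+1%:R by rewrite -truncn_lt_nat.
have Nv : (N%:R : R) <= v by rewrite truncn_le; apply: le_trans uv.
have u0' : 0 < u by apply: lt_trans u1.
have h1 : (ln (N%:R : R))^-1 <= (ln u)^-1.
  have N1 : 1 < (N%:R : R) by apply: lt_trans uN.
  have N0 : 0 < (N%:R : R) by apply: lt_trans N1.
  rewrite lef_pV2 ?posrE ?ln_gt0 // ler_ln ?posrE //; exact: ltW.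
have h2 : \sum_(M.+1 <= n < N) (n%:R * ln (n%:R : R))^-1 <= (ln u)^-1 + (ln (ln v) - ln (ln u)).
  case: (eqVneq M.+1 N) => [e|ne].
    by rewrite e big_geq // addr_ge0 // invr_ge0 ltW.
  have M1N : (M.+1 < N)%N by rewrite ltn_neqAle ne MltN.
  rewrite big_ltn //; apply: lerD.
    have M10 : (0 : R) < M.+1%:R by rewrite ltr0n.
    have lM1 : ln u <= ln (M.+1%:R : R) by rewrite ler_ln ?posrE //; exact: ltW.
    rewrite invfM; apply: le_trans (_ : (ln (M.+1%:R : R))^-1 <= _).
      apply: ler_piMl; first by rewrite invr_ge0; apply: ltW; apply: lt_le_trans lM1.
      by rewrite invf_le1 // ler1n.
    rewrite lef_pV2 ?posrE //; apply: lt_le_trans lM1 => //.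
  have hM : (2 <= M.+1)%N by apply: leqW.
  have MN1 : (M.+1 <= N.-1)%N by rewrite -ltnS prednK // (leq_trans _ M1N).
  have := @tele_sum M.+1 (N.-1 - M.+1) hM; rewrite subnKC // prednK; last by rewrite (leq_trans _ M1N).
  move/le_trans; apply.
  have e1 : ln (ln (N.-1%:R : R)) <= ln (ln v).
    apply: lnln_le; first by rewrite ltr1n (leq_trans _ MN1).
    by apply: le_trans Nv; rewrite ler_nat leq_pred.
  have e2 : ln (ln u) <= ln (ln (M.+1%:R : R)) by apply: lnln_le => //; apply: ltW.
  lra.
move: h1 h2; set a := (ln u)^-1; set b := (ln (N%:R : R))^-1; set s := \sum_(_ <= _ < _) _; lra.
Qed.

Lemma ge2_of_ln (y : R) : 1 < ln y -> 2 <= y.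
Proof.
move=> ly; case: (lerP y 0) => y0; first by move: ly; rewrite ln0 //; lra.
rewrite leNgt; apply/negP => y2.
have h := @ln_le_sub1 R 2 (ltr0Sn _ 1).
have : ln y < ln 2 by rewrite ltr_ln ?posrE //.
lra.
Qed.

Lemma step_double (y w : R) : 8 * (C + 1) <= ln y -> y <= w ->
  ln (ln w) - ln (ln y) <= (4 * (C + 1))^-1 ->
  GN (Num.truncn w) <= 2 * GN (Num.truncn y).
Proof.
move=> ly yw hD.
have c1 : 1 <= C + 1 by have := C_ge0; lra.
have ly1 : 1 < ln y by lra.
have y2 := @ge2_of_ln _ ly1.
have := @mainA _ _ y2 yw; rewrite sum_gn_GN //; last by apply: le_trans y2.
have ly0 : 0 < ln y by lra.
have h2 : 2 * (ln y)^-1 <= (4 * (C + 1))^-1.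
  have e : (ln y)^-1 <= (8 * (C + 1))^-1.
    rewrite lef_pV2 ?posrE //; lra.
  have -> : (4 * (C + 1))^-1 = 2 * (8 * (C + 1))^-1 by field; lra.
  move: e; set a := (ln y)^-1; set b := (8 * (C + 1))^-1; lra.
have hs : (C + 1) * (2 * (ln y)^-1 + (ln (ln w) - ln (ln y))) <= 2^-1.
  have : 2 * (ln y)^-1 + (ln (ln w) - ln (ln y)) <= 2 * (4 * (C + 1))^-1 by lra.
  move/(ler_wpM2l (_ : 0 <= C + 1)) => /(_ (le_trans ler01 c1)).
  move/le_trans; apply; rewrite le_eqVlt; apply/orP; left; apply/eqP; field; lra.
have G0 := GN_ge0 (Num.truncn w).
have := ler_wpM2l G0 hs; rewrite mulrA [GN _ * _]mulrC.
set G := GN (Num.truncn w); set H := GN (Num.truncn y); set X := (C + 1) * G * _.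
move=> h1 h3; lra.
Qed.

Lemma chain (d x : R) : 0 < d -> d <= (4 * (C + 1))^-1 -> 8 * (C + 1) <= ln x ->
  forall j w, 0 < w -> ln w <= (1 + j%:R * d) * ln x ->
  GN (Num.truncn w) <= 2 ^+ j * GN (Num.truncn x).
Proof.
move=> d0 dc lx.
have c1 : 1 <= C + 1 by have := C_ge0; lra.
have lx0 : 0 < ln x by lra.
have x0 : 0 < x by case: (lerP x 0) => // x0; move: lx0; rewrite ln0 // ltxx.
elim=> [|j IH] w w0 lw.
  rewrite expr0 mul1r; apply: GN_mono; apply: le_truncn.
  by rewrite -ler_ln ?posrE //; move: lw; rewrite mul0r addr0 mul1r.
set a := (1 + j%:R * d) * ln x.
have jd : 0 <= j%:R * d by rewrite mulr_ge0 // ltW.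
have a0 : ln x <= a by rewrite /a; have := mulr_ge0 jd (ltW lx0); nra.
case: (lerP (ln w) a) => lwa.
  apply: le_trans (IH w w0 lwa) _; rewrite exprS.
  apply: ler_wpM2r; first exact: GN_ge0.
  rewrite ler_peMl ?exprn_ge0 //; lra.
pose y := expR a.
have ly : ln y = a by rewrite /y expRK.
have y0 : 0 < y by rewrite /y expR_gt0.
have yw : y <= w by rewrite -ler_ln ?posrE // ly ltW.
have hD : ln (ln w) - ln (ln y) <= (4 * (C + 1))^-1.
  apply: le_trans dc; rewrite ly -ln_div ?posrE; last 2 first.
  - lra.
  - lra.
  have hq : 0 < ln w / a by apply: divr_gt0; lra.
  apply: le_trans (@ln_le_sub1 R _ hq) _.
  rewrite lerBlDl ler_pdivrMr; last lra.
  apply: le_trans lw _; rewrite /a.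
  have := mulr_ge0 (mulr_ge0 jd (ltW d0)) (ltW lx0).
  rewrite -natr1; nra.
have ly8 : 8 * (C + 1) <= ln y by rewrite ly; lra.
apply: le_trans (@step_double y w ly8 yw hD) _.
rewrite exprS -mulrA; apply: ler_wpM2l => //.
by apply: IH => //; rewrite ly.
Qed.

Lemma GN_ge1 N : (0 < N)%N -> 1 <= GN N.
Proof.
move=> N0; apply: le_trans (@GN_mono 1 N N0).
rewrite (GN_rec 0) /GN big_mkcond big_nat1 /= add0r g1 divr1.
by [].
Qed.

Lemma final : exists K : R, forall x u v : R,
    2 <= x -> x `^ (2^-1) <= u -> u <= v -> v <= x `^ (3 / 2) ->
    `|sum_gn g u v| <= K * ((ln (ln v / ln u)) + (ln x)^-1) * sum_gn g 0 x.
Proof.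
set c := C + 1.
have c1 : 1 <= c by rewrite /c; have := C_ge0; lra.
have ce : c = C + 1 by [].
pose d := (4 * c)^-1.
have d0 : 0 < d by rewrite /d invr_gt0; lra.
pose J := (Num.truncn (2 * c)).+1.
have Jd : 2^-1 <= J%:R * d.
  have hJ : 2 * c < J%:R by apply: truncnS_gt.
  rewrite /d ler_pdivlMr; last lra.
  lra.
pose L := 8 * c + 2.
pose V := expR (3 / 2 * L).
exists (4 * c * 2 ^+ J + L * GN (Num.truncn V)).
move=> x u v x2 xu uv vx.
have x0 : 0 < x by lra.
have lx : 0 < ln x by apply: ln_gt0; lra.
have u0 : 0 < u by apply: lt_le_trans xu; exact: powR_gt0.
have v0 : 0 < v by apply: lt_le_trans uv.
have hu : 2^-1 * ln x <= ln u.
  by rewrite -ln_powR ler_ln ?posrE ?powR_gt0.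
have hv : ln v <= 3 / 2 * ln x.
  by rewrite -ln_powR ler_ln ?posrE ?powR_gt0.
have hu2 : ln x <= 2 * ln u.
  by move: hu; rewrite -(@ler_pM2l _ 2) // mulrA mulfV // mul1r.
have lu0 : 0 < ln u by apply: lt_le_trans hu; rewrite mulr_gt0.
have luv : ln u <= ln v by rewrite ler_ln ?posrE.
have lv0 : 0 < ln v by apply: lt_le_trans luv.
have S0 : 0 <= sum_gn g u v by apply: sumr_ge0 => n _; apply: divr_ge0.
rewrite ger0_norm //.
have Gx : sum_gn g 0 x = GN (Num.truncn x).
  by rewrite /sum_gn; apply: eq_bigl => n; rewrite ltr0n andbb.
rewrite Gx.
have D0 : 0 <= ln (ln v / ln u).
  by apply: ln_ge0; rewrite ler_pdivlMr // mul1r.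
have Gx1 : 1 <= GN (Num.truncn x) by apply: GN_ge1; rewrite truncn_gt0; lra.
have lxi : 0 < (ln x)^-1 by rewrite invr_gt0.
set P := ln (ln v / ln u) + (ln x)^-1.
have P0 : 0 <= P by rewrite /P; lra.
set Gx' := GN (Num.truncn x).
have K0 : 0 <= 4 * c * 2 ^+ J by rewrite mulr_ge0 ?exprn_ge0 //; lra.
have K1 : 0 <= L * GN (Num.truncn V) by rewrite mulr_ge0 ?GN_ge0 // /L; lra.
case: (lerP L (ln x)) => lxL.
  have u2 : 2 <= u by apply: ge2_of_ln; rewrite /L in lxL; lra.
  have hA := @mainA u v u2 uv.
  have hc : GN (Num.truncn v) <= 2 ^+ J * Gx'.
    apply: (@chain d x) => //; first by rewrite /L in lxL; lra.
    apply: le_trans hv _; apply: ler_wpM2r; first exact: ltW.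
    lra.
  have hQ : 2 * (ln u)^-1 + (ln (ln v) - ln (ln u)) <= 4 * P.
    rewrite -ln_div ?posrE // /P.
    have : (ln u)^-1 <= 2 * (ln x)^-1.
      have -> : 2 * (ln x)^-1 = (2^-1 * ln x)^-1 by rewrite invfM invrK.
      by rewrite lef_pV2 ?posrE ?mulr_gt0.
    set a := (ln u)^-1; set b := (ln x)^-1; lra.
  apply: le_trans hA _.
  have Q0 : 0 <= 2 * (ln u)^-1 + (ln (ln v) - ln (ln u)).
    rewrite -ln_div ?posrE //; apply: addr_ge0 => //; apply: mulr_ge0 => //.
    by rewrite invr_ge0 ltW.
  apply: le_trans (_ : _ <= (C + 1) * (2 ^+ J * Gx') * (4 * P)) _.
    apply: ler_pM => //; first by apply: mulr_ge0; [lra|apply: GN_ge0].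
    apply: ler_wpM2l => //; lra.
  have e : (C + 1) * (2 ^+ J * Gx') * (4 * P) = (4 * c * 2 ^+ J) * (P * Gx') by rewrite ce; ring.
  have -> : (4 * c * 2 ^+ J + L * GN (Num.truncn V)) * P * Gx' =
    (4 * c * 2 ^+ J) * (P * Gx') + (L * GN (Num.truncn V)) * (P * Gx') by ring.
  rewrite e lerDl; apply: mulr_ge0 => //; apply: mulr_ge0 => //; exact: GN_ge0.
have GV0 : 0 <= GN (Num.truncn V) by apply: GN_ge0.
have vV : v <= V.
  apply: ltW; rewrite -ltr_ln ?posrE ?expR_gt0 // /V expRK.
  apply: le_lt_trans hv _; by rewrite ltr_pM2l.
have hsum : sum_gn g u v <= GN (Num.truncn V).
  rewrite (@sum_gn_GN u v (ltW u0) uv).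
  have := GN_ge0 (Num.truncn u); have := @GN_mono _ _ (le_truncn vV); lra.
apply: le_trans hsum _.
have hL : 1 <= L * (ln x)^-1 by rewrite ler_pdivlMr // mul1r ltW.
have s1 : GN (Num.truncn V) <= L * GN (Num.truncn V) * (ln x)^-1.
  rewrite mulrAC -[X in X <= _]mul1r; apply: ler_wpM2r => //.
have s2 : L * GN (Num.truncn V) * (ln x)^-1 <= L * GN (Num.truncn V) * P.
  apply: ler_wpM2l => //; rewrite /P lerDr //.
have s3 : L * GN (Num.truncn V) * P <= L * GN (Num.truncn V) * P * Gx'.
  rewrite -[X in X <= _]mulr1; apply: ler_wpM2l => //; exact: mulr_ge0.
have s4 : L * GN (Num.truncn V) * P * Gx' <= (4 * c * 2 ^+ J + L * GN (Num.truncn V)) * P * Gx'.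
  rewrite -[X in X <= _]mulrA -[X in _ <= X]mulrA; apply: ler_wpM2r; first by apply: mulr_ge0 => //; exact: GN_ge0.
  by rewrite lerDr.
by apply: le_trans s1 (le_trans s2 (le_trans s3 s4)).
Qed.

End Main.

Theorem lemma3 (R : realType) (g : nat -> R) :
  multiplicative_fn g ->
  nontrivial g ->
  (forall n : nat, 0 <= g n) ->
  (exists B : R, forall p : nat, prime p -> g p <= B) ->
  cvgn (series (pp2_terms g)) ->
  (exists C : R, forall y : R, 2 <= y -> `|y^-1 * cheb_g g y| <= C) ->
  exists K : R, forall x u v : R,
    2 <= x -> x `^ (2^-1) <= u -> u <= v -> v <= x `^ (3 / 2) ->
    `|sum_gn g u v| <= K * ((ln (ln v / ln u)) + (ln x)^-1) * sum_gn g 0 x.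
Proof.
move=> [g1 gM] _ g0 _ _ [C hC].
exact: (@final R g g1 gM g0 C hC).
Qed.
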